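(* Let $\mathbf{AUS}_3$ be the set of density matrices $\sigma$ on $\mathbb{C}^2\otimes\mathbb{C}^2$ such that for every unitary $U$ on $\mathbb{C}^2\otimes\mathbb{C}^2$, every choice of unit vectors $\hat u_1,\hat u_2,\hat u_3\in\mathbb{R}^3$ and every choice of orthonormal vectors $\hat v_1,\hat v_2,\hat v_3\in\mathbb{R}^3$, $$\frac{1}{\sqrt3}\Big|\sum_{i=1}^3\mathrm{Tr}\big(U\sigma U^\dagger\,(\hat u_i\cdot\vec s)\otimes(\hat v_i\cdot\vec s)\big)\Big|\le 1.$$ Then a two-qubit state $\sigma$ belongs to $\mathbf{AUS}_3$ if and only if its purity satisfies $\mathrm{Tr}(\sigma^2)\le 1/2$; equivalently, iff $\|\sigma-I/4\|_F\le 1/2$, where $\|\cdot\|_F$ is the Frobenius norm.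
   Context: $\vec{s}=(s_1,s_2,s_3)$ denotes the vector of Pauli matrices, and for $\hat w\in\mathbb{R}^3$, $\hat w\cdot\vec s=\sum_k w_k s_k$. The purity of $\sigma$ is $\mathrm{Tr}(\sigma^2)$. *)

(* Defs.v *)
From HB Require Import structures.
From mathcomp Require Import all_boot all_order all_algebra.
From mathcomp Require Import complex mxtens.
Set Implicit Arguments. Unset Strict Implicit. Unset Printing Implicit Defensive.
Import Order.TTheory GRing.Theory Num.Theory.
Local Open Scope ring_scope.
Local Open Scope complex_scope.

Section Defs.
Variable R : rcfType.
Local Notation C := R[i].

Definition adj m n (A : 'M[C]_(m, n)) : 'M[C]_(n, m) := (map_mx (@conjc R) A)^T.

Definition pauli (k : 'I_3) : 'M[C]_2 :=
  \matrix_(i < 2, j < 2)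
    if k == 0 :> nat then (if i == j then 0 else 1)
    else if k == 1 :> nat then
      (if i == j then 0 else if i == 0 :> nat then - 'i else 'i)
    else (if i == j then (if i == 0 :> nat then 1 else -1) else 0).

Definition pdot (w : 'rV[R]_3) : 'M[C]_2 := \sum_(k < 3) (w 0 k)%:C *: pauli k.

Definition rdot (a b : 'rV[R]_3) : R := \sum_(k < 3) a 0 k * b 0 k.

Definition unit_vec (a : 'rV[R]_3) : Prop := rdot a a = 1.

Definition orthonormal3 (v : 'I_3 -> 'rV[R]_3) : Prop :=
  forall i j, rdot (v i) (v j) = (i == j)%:R.

Definition unitary n (U : 'M[C]_n) : Prop := U *m adj U = 1%:M.

Definition density n (s : 'M[C]_n) : Prop :=
  [/\ adj s = s,
      (forall v : 'cV[C]_n, 0 <= (adj v *m s *m v) 0 0)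
    & \tr s = 1].

Definition AUS3 (s : 'M[C]_(2 * 2)) : Prop :=
  density s /\
  forall (U : 'M[C]_(2 * 2)) (u v : 'I_3 -> 'rV[R]_3),
    unitary U -> (forall i, unit_vec (u i)) -> orthonormal3 v ->
    ((Num.sqrt (3 : R))^-1)%:C *
      `| \sum_(i < 3) \tr (U *m s *m adj U *m (pdot (u i) *t pdot (v i))) | <= 1.

Definition purity n (s : 'M[C]_n) : C := \tr (s *m s).

Definition frob m n (A : 'M[C]_(m, n)) : R :=
  Num.sqrt (\sum_(i < m) \sum_(j < n) Normc.normc (A i j) ^+ 2).

End Defs.

(* Main.v *)
Require Import Defs.
From HB Require Import structures.
From mathcomp Require Import all_boot all_order all_algebra.
From mathcomp Require Import complex mxtens.
From mathcomp Require Import ring lra.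
From mathcomp Require Import sesquilinear spectral.
Import Order.TTheory GRing.Theory Num.Theory.
Local Open Scope ring_scope.
Local Open Scope complex_scope.
Set Implicit Arguments. Unset Strict Implicit. Unset Printing Implicit Defensive.

Section Dev.
Variable R : rcfType.
Local Notation C := R[i].
Implicit Types (a b : 'rV[R]_3).

Lemma adjE m n (A : 'M[C]_(m, n)) : adj A = (map_mx conjc A)^T.
Proof. by []. Qed.

Lemma adj_mul m n p (A : 'M[C]_(m, n)) (B : 'M[C]_(n, p)) : adj (A *m B) = adj B *m adj A.
Proof. by rewrite !adjE map_mxM trmx_mul. Qed.

Lemma adjK m n (A : 'M[C]_(m, n)) : adj (adj A) = A.
Proof. by apply/matrixP=> i j; rewrite !mxE conjcK. Qed.

Lemma adjD m n (A B : 'M[C]_(m, n)) : adj (A + B) = adj A + adj B.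
Proof. by apply/matrixP=> i j; rewrite !mxE rmorphD. Qed.

Lemma adjN m n (A : 'M[C]_(m, n)) : adj (- A) = - adj A.
Proof. by apply/matrixP=> i j; rewrite !mxE rmorphN. Qed.

Lemma adjZr m n (x : R) (A : 'M[C]_(m, n)) : adj (x%:C *: A) = x%:C *: adj A.
Proof. by apply/matrixP=> i j; rewrite !mxE rmorphM; congr (_ * _); exact: conjc_real. Qed.

Lemma adj_scalar n (x : R) : adj (x%:C%:M : 'M[C]_n) = x%:C%:M.
Proof. apply/matrixP=> i j; rewrite !mxE rmorphMn eq_sym; congr (_ *+ _); exact: conjc_real. Qed.

Lemma adj1 n : adj (1%:M : 'M[C]_n) = 1%:M.
Proof. by apply/matrixP=> i j; rewrite !mxE rmorphMn rmorph1 eq_sym. Qed.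

Lemma adj_tens m n p q (A : 'M[C]_(m, n)) (B : 'M[C]_(p, q)) :
  adj (A *t B) = adj A *t adj B.
Proof. by apply/matrixP=> i j; rewrite !mxE rmorphM. Qed.

Lemma tr_adj n (A : 'M[C]_n) : \tr (adj A) = conjc (\tr A).
Proof. by rewrite /mxtrace rmorph_sum; apply: eq_bigr => i _; rewrite !mxE. Qed.

Lemma sum_tens m n (F : 'I_(m * n) -> C) :
  \sum_k F k = \sum_(i < m) \sum_(j < n) F (mxtens_index (i, j)).
Proof.
rewrite pair_big /= (reindex (@mxtens_index m n)).
  by apply: eq_bigr => -[i j].
by exists (@mxtens_unindex m n) => x _; [exact: mxtens_indexK|exact: mxtens_unindexK].
Qed.

Lemma tr_tens m n (A : 'M[C]_m) (B : 'M[C]_n) : \tr (A *t B) = \tr A * \tr B.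
Proof.
rewrite /mxtrace sum_tens mulr_suml; apply: eq_bigr => i _.
by rewrite mulr_sumr; apply: eq_bigr => j _; rewrite tensmxE.
Qed.

Lemma tr_ge0 m n (A : 'M[C]_(m, n)) : 0 <= \tr (A *m adj A).
Proof.
apply: sumr_ge0 => i _; rewrite mxE; apply: sumr_ge0 => j _.
by rewrite !mxE mulcJ_ge0.
Qed.

Lemma real_of_conj (z : C) : conjc z = z -> z = (complex.Re z)%:C.
Proof. by case: z => a b /= [] h; apply/eqP; rewrite eq_complex /= eqxx /=; apply/eqP; lra. Qed.

Lemma ord3_cases (P : 'I_3 -> Prop) :
  P 0 -> P 1 -> P 2%:R -> forall k, P k.
Proof.
move=> h0 h1 h2 [[|[|[|//]]] Hk].
- by rewrite (_ : Ordinal Hk = 0) //; apply: val_inj.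
- by rewrite (_ : Ordinal Hk = 1) //; apply: val_inj.
- by rewrite (_ : Ordinal Hk = 2%:R) //; apply: val_inj.
Qed.

Lemma sum2 (V : zmodType) (F : 'I_2 -> V) : \sum_i F i = F 0 + F 1.
Proof.
rewrite !big_ord_recl big_ord0 addr0; congr (F _ + F _); exact: val_inj.
Qed.

Lemma sum3 (V : zmodType) (F : 'I_3 -> V) : \sum_i F i = F 0 + F 1 + F 2%:R.
Proof.
rewrite !big_ord_recl big_ord0 addr0 addrA; congr (F _ + F _ + F _); exact: val_inj.
Qed.

Lemma tr2 (A : 'M[C]_2) : \tr A = A 0 0 + A 1 1.
Proof. by rewrite /mxtrace sum2. Qed.

Lemma mul2E (A B : 'M[C]_2) i j : (A *m B) i j = A i 0 * B 0 j + A i 1 * B 1 j.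
Proof. by rewrite mxE sum2. Qed.

Lemma pauli_tr k : \tr (pauli R k) = 0.
Proof.
by elim/ord3_cases: k; rewrite tr2 !mxE /= ?addrN ?addr0.
Qed.

Lemma pauli_adj k : adj (pauli R k) = pauli R k.
Proof.
elim/ord3_cases: k; apply/matrixP => i j; rewrite !mxE;
  case: i => [[|[|//]] Hi]; case: j => [[|[|//]] Hj] /=. all: by apply/eqP; rewrite eq_complex /= ?oppr0 ?opprK ?eqxx.
Qed.

Lemma pauli_tr_mul k m : \tr (pauli R k *m pauli R m) = if k == m then 2 else 0.
Proof.
elim/ord3_cases: k; elim/ord3_cases: m; rewrite tr2 !mul2E !mxE /=.
all: by apply/eqP; rewrite eq_complex /= ; apply/andP; split; apply/eqP; ring.
Qed.

Lemma tr_sum n (I : finType) (F : I -> 'M[C]_n) : \tr (\sum_i F i) = \sum_i \tr (F i).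
Proof. exact: raddf_sum. Qed.

Lemma tr_pdot a : \tr (pdot a) = 0.
Proof.
rewrite /pdot tr_sum big1 // => k _; by rewrite mxtraceZ pauli_tr mulr0.
Qed.

Lemma adj_pdot a : adj (pdot a) = pdot a.
Proof.
apply/matrixP => i j; rewrite !mxE !summxE rmorph_sum; apply: eq_bigr => k _.
rewrite !mxE rmorphM; congr (_ * _); first exact: conjc_real.
by have := congr1 (fun M : 'M[C]_2 => M i j) (pauli_adj k); rewrite !mxE.
Qed.

Lemma trZZ n (x y : C) (A B : 'M[C]_n) : \tr ((x *: A) *m (y *: B)) = x * y * \tr (A *m B).
Proof. by rewrite -scalemxAl -scalemxAr !mxtraceZ mulrA. Qed.

Lemma tr_pdot_mul a b : \tr (pdot a *m pdot b) = 2 * (rdot a b)%:C.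
Proof.
rewrite /pdot /rdot mulmx_suml tr_sum.
under eq_bigr => k _ do rewrite mulmx_sumr tr_sum.
under eq_bigr => k _ do under eq_bigr => m _ do rewrite trZZ pauli_tr_mul.
rewrite !sum3 /= !rmorphD !rmorphM /=; ring.
Qed.

Definition Wm (u v : 'I_3 -> 'rV[R]_3) : 'M[C]_(2 * 2) :=
  \sum_(i < 3) pdot (u i) *t pdot (v i).

Lemma adj_sum m n (I : finType) (F : I -> 'M[C]_(m, n)) :
  adj (\sum_i F i) = \sum_i adj (F i).
Proof.
apply/matrixP => i j; rewrite !mxE !summxE rmorph_sum; apply: eq_bigr => k _.
by rewrite !mxE.
Qed.

Lemma adj_W u v : adj (Wm u v) = Wm u v.
Proof.
by rewrite /Wm adj_sum; apply: eq_bigr => k _; rewrite adj_tens !adj_pdot.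
Qed.

Lemma tr_W u v : \tr (Wm u v) = 0.
Proof.
by rewrite /Wm tr_sum big1 // => k _; rewrite tr_tens tr_pdot mul0r.
Qed.

Lemma tr_WW u v : (forall i, unit_vec (u i)) -> orthonormal3 v ->
  \tr (Wm u v *m Wm u v) = 12.
Proof.
move=> hu hv; rewrite /Wm mulmx_suml tr_sum.
under eq_bigr => k _ do rewrite mulmx_sumr tr_sum.
under eq_bigr => k _ do under eq_bigr => m _ do
  rewrite tensmx_mul tr_tens !tr_pdot_mul hv.
rewrite (eq_bigr (fun k : 'I_3 => 4)).
  by rewrite sum3; ring.
move=> k _; rewrite (bigD1 k) //= eqxx (hu k) big1 ?addr0.
  by change (2 * 1 * (2 * 1) = 4 :> C); ring.
move=> m /negbTE; rewrite eq_sym => ->.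
by rewrite (_ : (false%:R : R)%:C = 0) // !mulr0.
Qed.

Lemma normC_real (x : R) : `|x%:C| = `|x|%:C.
Proof. by rewrite normc_def /= expr0n /= addr0 sqrtr_sqr. Qed.

Lemma trB n (A B : 'M[C]_n) : \tr (A - B) = \tr A - \tr B.
Proof. exact: raddfB. Qed.

Lemma tr_expand n (a : R) (Y W : 'M[C]_n) :
  \tr ((a%:C *: Y - W) *m (a%:C *: Y - W)) =
  a%:C * a%:C * \tr (Y *m Y) - a%:C * \tr (Y *m W) - a%:C * \tr (W *m Y)
  + \tr (W *m W).
Proof.
rewrite mulmxBl !mulmxBr -!scalemxAl -!scalemxAr !trB !mxtraceZ.
ring.
Qed.

Lemma bound_B n (Y W : 'M[C]_n) : adj Y = Y -> adj W = W ->
  \tr (Y *m Y) <= ((4:R)^-1)%:C -> \tr (W *m W) = 12 ->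
  `|\tr (Y *m W)| <= (Num.sqrt (3:R))%:C.
Proof.
move=> hY hW ht hWW.
have hz : \tr (Y *m W) = (complex.Re (\tr (Y *m W)))%:C.
  by apply: real_of_conj; rewrite -tr_adj adj_mul hY hW mxtrace_mulC.
have hy : \tr (Y *m Y) = (complex.Re (\tr (Y *m Y)))%:C.
  by apply: real_of_conj; rewrite -tr_adj adj_mul hY.
set x := complex.Re _ in hz; set y := complex.Re _ in hy.
have key : forall a : R, 0 <= a * a * y - 2 * a * x + 12.
  move=> a; have := tr_ge0 (a%:C *: Y - W).
  rewrite adjD adjN adjZr hY hW tr_expand hWW (mxtrace_mulC W Y) hz hy.
  have e : forall p q r : R, p%:C * p%:C * r%:C - p%:C * q%:C - p%:C * q%:C + 12
     = (p * p * r - 2 * p * q + 12)%:C.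
    by move=> p q r; rewrite rmorphD rmorphB !rmorphM !rmorph_nat; ring.
  by rewrite e lecR.
rewrite hy lecR in ht.
rewrite [X in `|X|]hz normC_real lecR.
have s3 : Num.sqrt (3:R) ^+ 2 = 3 by rewrite sqr_sqrtr.
have s3p : 0 < Num.sqrt (3:R) by rewrite sqrtr_gt0.
have k1 := key (4 * Num.sqrt 3); have k2 := key (- (4 * Num.sqrt 3)).
rewrite ler_norml; apply/andP; split; nra.
Qed.

Lemma mulcJ_normc (z : C) : z * conjc z = (Normc.normc z ^+ 2)%:C.
Proof.
case: z => a b; rewrite /Normc.normc sqr_sqrtr ?addr_ge0 ?sqr_ge0 //.
by apply/eqP; rewrite eq_complex /=; apply/andP; split; apply/eqP; ring.
Qed.

Definition fsum n (X : 'M[C]_n) := \sum_(i < n) \sum_(j < n) Normc.normc (X i j) ^+ 2.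

Lemma fsum_ge0 n (X : 'M[C]_n) : 0 <= fsum X.
Proof. by apply: sumr_ge0 => i _; apply: sumr_ge0 => j _; apply: sqr_ge0. Qed.

Lemma tr_fsum n (X : 'M[C]_n) : \tr (X *m adj X) = (fsum X)%:C.
Proof.
rewrite /fsum rmorph_sum; apply: eq_bigr => i _; rewrite mxE rmorph_sum.
by apply: eq_bigr => j _; rewrite !mxE mulcJ_normc.
Qed.

Lemma frob_le n (X : 'M[C]_n) : (frob X <= (2:R)^-1) = (fsum X <= (4:R)^-1).
Proof.
rewrite /frob -/(fsum X).
have h4 : (4:R)^-1 = ((2:R)^-1) ^+ 2 by rewrite expr2 -invfM -natrM.
have h2 : (2:R)^-1 = Num.sqrt ((2:R)^-1 ^+ 2) by rewrite sqrtr_sqr ger0_norm // invr_ge0.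
by rewrite h4 {1}h2 ler_sqrt // sqr_ge0.
Qed.

Lemma XX_tr n (s : 'M[C]_n.+1) (q : R) : \tr s = 1 ->
  \tr ((s - q%:C%:M) *m (s - q%:C%:M)) = \tr (s *m s) - 2 * q%:C + (q * q)%:C * (n.+1)%:R.
Proof.
move=> hs; rewrite mulmxBl !mulmxBr !trB !mul_mx_scalar !mul_scalar_mx mxtraceZ hs.
by rewrite mxtraceZ mxtrace_scalar rmorphM -mulr_natr; ring.
Qed.

Definition Xof (s : 'M[C]_(2 * 2)) := s - ((4:R)^-1)%:C%:M.

Lemma adj_X s : adj s = s -> adj (Xof s) = Xof s.
Proof. by move=> hs; rewrite /Xof adjD adjN adj_scalar hs. Qed.

Lemma purity_fsum s : density s -> purity s = (fsum (Xof s) + (4:R)^-1)%:C.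
Proof.
case=> hs _ htr.
have := XX_tr ((4:R)^-1) (htr : \tr (s : 'M[C]_(3.+1)) = 1).
move=> h.
have e : (fsum (Xof s))%:C = \tr (Xof s *m Xof s) by rewrite -tr_fsum adj_X.
rewrite /purity.
have -> : \tr (s *m s) = (fsum (Xof s))%:C + 2 * ((4:R)^-1)%:C - (((4:R)^-1) * (4:R)^-1)%:C * 4%:R.
  by rewrite e /Xof h; ring.
rewrite !rmorphD !rmorphM fmorphV rmorph_nat; field.
by [].
Qed.

Lemma sum_trW (M : 'M[C]_(2 * 2)) u v :
  \sum_(i < 3) \tr (M *m (pdot (u i) *t pdot (v i))) = \tr (M *m Wm u v).
Proof. by rewrite /Wm mulmx_sumr tr_sum. Qed.

Lemma dirB s : density s -> fsum (Xof s) <= (4:R)^-1 -> AUS3 s.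
Proof.
move=> ds hf; split => // U u v hU hu hv.
have hU' : adj U *m U = 1%:M := mulmx1C hU.
have hs : adj s = s by case: ds.
set X := Xof s.
pose Y := U *m X *m adj U.
have eS : U *m s *m adj U = Y + ((4:R)^-1)%:C%:M.
  by rewrite /Y /X /Xof mulmxBr mulmxBl mul_mx_scalar -scalemxAl hU scalemx1 subrK.
have hY : adj Y = Y by rewrite /Y !adj_mul adjK adj_X // mulmxA.
have hYY : \tr (Y *m Y) = (fsum X)%:C.
  rewrite -tr_fsum adj_X // /Y !mulmxA -(mulmxA (U *m X) (adj U) U) hU' mulmx1.
  by rewrite mxtrace_mulC !mulmxA hU' mul1mx.
have hb := bound_B hY (adj_W u v) _ (tr_WW hu hv).
rewrite sum_trW eS mulmxDl mxtraceD mul_scalar_mx mxtraceZ tr_W mulr0 addr0.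
have -> : 1 = ((Num.sqrt (3:R))^-1)%:C * (Num.sqrt (3:R))%:C.
  by rewrite -rmorphM mulVf // sqrtr_eq0 -ltNge ltr0n.
apply: ler_wpM2l; first by rewrite ler0c invr_ge0 sqrtr_ge0.
by apply: hb; rewrite hYY lecR.
Qed.

Lemma tstarE m n (M : 'M[C]_(m, n)) : map_mx Num.conj (M^T) = adj M.
Proof. by apply/matrixP => i j; rewrite !mxE. Qed.

Lemma spectral_herm n (s : 'M[C]_n) : adj s = s ->
  exists (P : 'M[C]_n) (d : 'rV[C]_n),
    P *m adj P = 1%:M /\ s = adj P *m diag_mx d *m P.
Proof.
move=> hs.
have hn : s \is normalmx by apply/normalmxP; rewrite tstarE hs.
have hu := spectral_unitarymx s.
exists (spectralmx s), (spectral_diag s); split.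
  by move/unitarymxP: hu; rewrite tstarE.
by rewrite -tstarE -invmx_unitary //; apply/orthomx_spectralP.
Qed.

Lemma ab_exists (x y : R) : 0 <= x -> y <= 0 ->
  exists a b : R, a ^+ 2 + b ^+ 2 = 1 /\ x * a ^+ 2 + y * b ^+ 2 = 0.
Proof.
move=> hx hy; have [hxy|hxy] := eqVneq (x - y) 0.
  exists 1, 0; split; first by rewrite expr1n expr0n addr0.
  by rewrite expr1n expr0n mulr0 addr0 mulr1; lra.
have hpos : 0 < x - y by rewrite lt_def hxy /=; lra.
exists (Num.sqrt (- y / (x - y))), (Num.sqrt (x / (x - y))).
rewrite !sqr_sqrtr ?divr_ge0 ?oppr_ge0 //; try lra.
split; field; lra.
Qed.

Lemma sum3_perm (p q r : 'I_3) (F : 'I_3 -> R) : p != q -> q != r -> p != r ->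
  \sum_k F k = F p + F q + F r.
Proof.
rewrite sum3.
by elim/ord3_cases: p; elim/ord3_cases: q; elim/ord3_cases: r => //= _ _ _; lra.
Qed.

Definition vec3 (p q : 'I_3) (x y z : R) : 'rV[R]_3 :=
  \row_k (if k == p then x else if k == q then y else z).

Lemma rdot_vec3 p q r x y z x' y' z' : p != q -> q != r -> p != r ->
  rdot (vec3 p q x y z) (vec3 p q x' y' z') = x * x' + y * y' + z * z'.
Proof.
move=> pq qr pr; rewrite /rdot (sum3_perm _ pq qr pr) !mxE eqxx.
by rewrite eq_sym (negbTE pq) eqxx eq_sym (negbTE pr) eq_sym (negbTE qr).
Qed.

Lemma qsum_vec3 (e : 'I_3 -> R) p q r x y z : p != q -> q != r -> p != r ->
  \sum_k e k * (vec3 p q x y z) 0 k ^+ 2 = e p * x ^+ 2 + e q * y ^+ 2 + e r * z ^+ 2.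
Proof.
move=> pq qr pr; rewrite (sum3_perm _ pq qr pr) !mxE eqxx.
by rewrite eq_sym (negbTE pq) eqxx eq_sym (negbTE pr) eq_sym (negbTE qr).
Qed.

Lemma null_basis_pqr (e : 'I_3 -> R) p q r : p != q -> q != r -> p != r ->
  0 <= e p -> e q <= 0 -> e p + e q + e r = 0 ->
  exists V : 'I_3 -> 'rV[R]_3, orthonormal3 V /\
    forall j, \sum_k e k * (V j 0 k) ^+ 2 = 0.
Proof.
move=> pq qr pr hp hq hs.
have [a [b [hab he]]] := ab_exists hp hq.
pose h := Num.sqrt ((2:R)^-1).
have hh : h ^+ 2 = 2^-1 by rewrite sqr_sqrtr // invr_ge0.
pose V := fun j : 'I_3 => if j == 0 then vec3 p q a b 0
  else if j == 1 then vec3 p q (- b * h) (a * h) h else vec3 p q (b * h) (- a * h) h.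
exists V; split.
{ move=> i j; rewrite /V.
  elim/ord3_cases: i; elim/ord3_cases: j => /=; rewrite (@rdot_vec3 p q r _ _ _ _ _ _ pq qr pr).
  all: nra. }
have key : e p * b ^+ 2 + e q * a ^+ 2 + e r = 0.
  have := congr1 (fun t => (e p + e q) * t) hab; rewrite /=; nra.
move=> j; rewrite /V; elim/ord3_cases: j => /=; rewrite (@qsum_vec3 e p q r _ _ _ pq qr pr).
all: rewrite ?exprMn ?hh ?sqrrN ?expr0n /=; nra.
Qed.

Lemma null_basis (e : 'I_3 -> R) : e 0 + e 1 + e 2%:R = 0 ->
  exists V : 'I_3 -> 'rV[R]_3, orthonormal3 V /\
    forall j, \sum_k e k * (V j 0 k) ^+ 2 = 0.
Proof.
move=> hs; have [h0|h0] := lerP 0 (e 0).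
  have [h2|h2] := lerP (e 2%:R) 0.
    by apply: (@null_basis_pqr e 0 2%:R 1) => //; lra.
  by apply: (@null_basis_pqr e 0 1 2%:R) => //; lra.
have [h1|h1] := lerP 0 (e 1).
  by apply: (@null_basis_pqr e 1 0 2%:R) => //; lra.
by apply: (@null_basis_pqr e 2%:R 0 1) => //; lra.
Qed.

Lemma choose_c (d0 d1 d2 d3 : R) : d0 + d1 + d2 + d3 = 1 ->
  2^-1 < d0 ^+ 2 + d1 ^+ 2 + d2 ^+ 2 + d3 ^+ 2 ->
  exists c0 c1 c2 : R, c0 ^+ 2 + c1 ^+ 2 + c2 ^+ 2 = 3 /\
   Num.sqrt 3 < d0 * (c0 - c1 + c2) + d1 * (- c0 + c1 + c2) + d2 * (c0 + c1 - c2)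
                + d3 * (- c0 - c1 - c2).
Proof.
move=> hsum hsq.
pose S := (d0 - 4^-1) ^+ 2 + (d1 - 4^-1) ^+ 2 + (d2 - 4^-1) ^+ 2 + (d3 - 4^-1) ^+ 2.
have hS : S = d0 ^+ 2 + d1 ^+ 2 + d2 ^+ 2 + d3 ^+ 2 - 4^-1.
  rewrite /S; have -> : d3 = 1 - d0 - d1 - d2 by lra.
  by field.
pose r := Num.sqrt S.
have hr2 : r ^+ 2 = S by rewrite sqr_sqrtr // hS; lra.
have hr : 2^-1 < r.
  have h0 : 0 <= r by apply: sqrtr_ge0.
  nra.
pose s3 := Num.sqrt (3:R).
have hs3 : s3 ^+ 2 = 3 by rewrite sqr_sqrtr.
have hs3p : 0 < s3 by rewrite sqrtr_gt0.
pose t := 2 * s3 / r.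
have ht : t * r = 2 * s3 by rewrite /t mulfVK //; apply/eqP; lra.
pose l0 := t * (d0 - 4^-1); pose l1 := t * (d1 - 4^-1).
pose l2 := t * (d2 - 4^-1); pose l3 := t * (d3 - 4^-1).
exists ((l0 - l1 + l2 - l3) / 4), ((- l0 + l1 + l2 - l3) / 4), ((l0 + l1 - l2 - l3) / 4).
have hl : l0 + l1 + l2 + l3 = 0 by rewrite /l0 /l1 /l2 /l3; nra.
split.
  have -> : ((l0 - l1 + l2 - l3) / 4) ^+ 2 + ((- l0 + l1 + l2 - l3) / 4) ^+ 2
      + ((l0 + l1 - l2 - l3) / 4) ^+ 2 = (t * r) ^+ 2 / 4.
    rewrite [(t * r) ^+ 2]exprMn hr2 /S /l0 /l1 /l2 /l3.
    have -> : d3 = 1 - d0 - d1 - d2 by lra.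
    by field.
  by rewrite ht exprMn hs3; field.
have -> : d0 * ((l0 - l1 + l2 - l3) / 4 - (- l0 + l1 + l2 - l3) / 4 + (l0 + l1 - l2 - l3) / 4)
  + d1 * (- ((l0 - l1 + l2 - l3) / 4) + (- l0 + l1 + l2 - l3) / 4 + (l0 + l1 - l2 - l3) / 4)
  + d2 * ((l0 - l1 + l2 - l3) / 4 + (- l0 + l1 + l2 - l3) / 4 - (l0 + l1 - l2 - l3) / 4)
  + d3 * (- ((l0 - l1 + l2 - l3) / 4) - (- l0 + l1 + l2 - l3) / 4 - (l0 + l1 - l2 - l3) / 4)
  = t * r * r.
  rewrite -mulrA -expr2 hr2 /S /l0 /l1 /l2 /l3.
  have -> : d3 = 1 - d0 - d1 - d2 by lra.
  by field.
rewrite ht; have h1 : 0 < s3 * (r - 2^-1) by apply: mulr_gt0 => //; lra.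
change (s3 < 2 * s3 * r); nra.
Qed.

Lemma pdot_entry a i j : pdot a i j = \sum_k (a 0 k)%:C * pauli R k i j.
Proof. by rewrite /pdot summxE; apply: eq_bigr => k _; rewrite mxE. Qed.

Lemma col_orth (V : 'I_3 -> 'rV[R]_3) : orthonormal3 V ->
  forall k m, \sum_j V j 0 k * V j 0 m = (k == m)%:R.
Proof.
move=> hV k m; pose M : 'M[R]_3 := \matrix_(j, k) V j 0 k.
have hM : M *m M^T = 1%:M.
  apply/matrixP => i j; rewrite !mxE -hV /rdot; apply: eq_bigr => l _.
  by rewrite !mxE.
have := congr1 (fun A : 'M[R]_3 => A k m) (mulmx1C hM).
by rewrite /= !mxE => <-; apply: eq_bigr => j _; rewrite !mxE.
Qed.

Lemma W_diag (c : 'I_3 -> R) (V : 'I_3 -> 'rV[R]_3) : orthonormal3 V ->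
  Wm (fun j => \row_k (c k * V j 0 k)) V =
  \sum_k (c k)%:C *: (pauli R k *t pauli R k).
Proof.
move=> hV; apply/matrixP => x y.
case: (mxtens_indexP x) => i1 i2; case: (mxtens_indexP y) => j1 j2.
rewrite /Wm !summxE.
under eq_bigr => j _ do rewrite tensmxE !pdot_entry mulr_suml.
under [RHS]eq_bigr => k _ do rewrite mxE tensmxE.
rewrite exchange_big /=; apply: eq_bigr => k _.
under eq_bigr => j _ do rewrite mulr_sumr.
rewrite exchange_big /= [LHS](bigD1 k) //= [X in _ + X]big1 ?addr0; last first.
  move=> m hm; rewrite (eq_bigr (fun j => ((c k)%:C * pauli R k i1 j1 * pauli R m i2 j2)
     * (V j 0 k * V j 0 m)%:C)).
    by rewrite -mulr_sumr -rmorph_sum col_orth // eq_sym (negbTE hm) mulr0.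
  by move=> j _; rewrite !mxE !rmorphM; ring.
rewrite (eq_bigr (fun j => ((c k)%:C * pauli R k i1 j1 * pauli R k i2 j2)
     * (V j 0 k * V j 0 k)%:C)).
  rewrite -mulr_sumr -rmorph_sum col_orth // eqxx.
  by rewrite rmorph1 mulr1 mulrA.
by move=> j _; rewrite !mxE !rmorphM; ring.
Qed.

Definition bt (x k : nat) : R :=
  match x, k with
  | 0, 0 => 1 | 3, 0 => 1 | 0, 1 => 1 | 3, 1 => -1
  | 1, 2 => 1 | 2, 2 => 1 | 1, 3 => 1 | 2, 3 => -1 | _, _ => 0 end.

Definition Bt : 'M[R]_(2 * 2) := \matrix_(x, k) bt x k.

Definition wt (c0 c1 c2 : R) (x y : nat) : R :=
  match x, y with
  | 0, 0 => c2 | 3, 3 => c2 | 1, 1 => - c2 | 2, 2 => - c2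
  | 0, 3 => c0 - c1 | 3, 0 => c0 - c1 | 1, 2 => c0 + c1 | 2, 1 => c0 + c1
  | _, _ => 0 end.

Definition Wr c0 c1 c2 : 'M[R]_(2 * 2) := \matrix_(x, y) wt c0 c1 c2 x y.

Lemma BtBt : Bt *m Bt^T = 2%:M.
Proof.
apply/matrixP => x z; rewrite !mxE.
rewrite !big_ord_recl big_ord0 /=.
case: x => [[|[|[|[|//]]]] Hx]; case: z => [[|[|[|[|//]]]] Hz]; rewrite !mxE /=; lra.
Qed.

Lemma BtWBt c0 c1 c2 (k : 'I_(2 * 2)) :
  (Bt^T *m Wr c0 c1 c2 *m Bt) k k =
  2 * (match nat_of_ord k with
       | 0 => c0 - c1 + c2 | 1 => - c0 + c1 + c2 | 2 => c0 + c1 - c2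
       | _ => - c0 - c1 - c2 end).
Proof.
rewrite mxE.
rewrite !big_ord_recl big_ord0 /=.
rewrite !mxE.
rewrite !big_ord_recl !big_ord0 /=.
case: k => [[|[|[|[|//]]]] Hk]; rewrite !mxE /=; lra.
Qed.

Lemma Wc_real (c : 'I_3 -> R) :
  \sum_k (c k)%:C *: (pauli R k *t pauli R k) =
  map_mx (real_complex R) (Wr (c 0) (c 1) (c 2%:R)).
Proof.
apply/matrixP => x y.
case: (mxtens_indexP x) => i1 i2; case: (mxtens_indexP y) => j1 j2.
rewrite summxE sum3 !mxE !mxtens_indexK.
case: i1 => [[|[|//]] H1]; case: i2 => [[|[|//]] H2];
case: j1 => [[|[|//]] H3]; case: j2 => [[|[|//]] H4] => /=.
all: apply/eqP; rewrite eq_complex /=; apply/andP; split; apply/eqP; ring.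
Qed.

Definition lam (c0 c1 c2 : R) (k : nat) : R :=
  match k with
  | 0 => c0 - c1 + c2 | 1 => - c0 + c1 + c2 | 2 => c0 + c1 - c2
  | _ => - c0 - c1 - c2 end.

Lemma choose_c4 (dd : 'I_(2 * 2) -> R) : \sum_k dd k = 1 ->
  2^-1 < \sum_k dd k ^+ 2 ->
  exists c0 c1 c2 : R, c0 ^+ 2 + c1 ^+ 2 + c2 ^+ 2 = 3 /\
   Num.sqrt 3 < \sum_k dd k * lam c0 c1 c2 k.
Proof.
rewrite !big_ord_recl !big_ord0 /= !addr0 => h1 h2.
set a0 := dd ord0 in h1 h2 *; set a1 := dd (lift ord0 ord0) in h1 h2 *.
set a2 := dd (lift ord0 (lift ord0 ord0)) in h1 h2 *.
set a3 := dd (lift ord0 (lift ord0 (lift ord0 ord0))) in h1 h2 *.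
have [c0 [c1 [c2 [hc hv]]]] := @choose_c a0 a1 a2 a3 ltac:(lra) ltac:(by move: h2; rewrite !addrA).
exists c0, c1, c2; split => //.
rewrite !big_ord_recl !big_ord0 /= !addr0 -/a0 -/a1 -/a2 -/a3.
move: hv; rewrite /lam /=; lra.
Qed.
Lemma adj_map_real m n (A : 'M[R]_(m, n)) :
  adj (map_mx (real_complex R) A) = map_mx (real_complex R) A^T.
Proof. by apply/matrixP => i j; rewrite !mxE; exact: conjc_real. Qed.

Lemma tr_diag_mul n (d : 'rV[C]_n) (M : 'M[C]_n) :
  \tr (diag_mx d *m M) = \sum_k d 0 k * M k k.
Proof. by rewrite mul_diag_mx /mxtrace; apply: eq_bigr => k _; rewrite mxE. Qed.

Lemma scale_map_entry m n (a : R) (M : 'M[R]_(m, n)) i j :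
  (a%:C *: map_mx (real_complex R) M) i j = a%:C * (M i j)%:C.
Proof. by rewrite !mxE. Qed.

Lemma dirC s : density s -> AUS3 s -> fsum (Xof s) <= (4:R)^-1.
Proof.
move=> ds [_ hA]; have hpur := purity_fsum ds.
case: ds => hs _ htr.
rewrite leNgt; apply/negP => hgt.
have [P [d [hP es]]] := spectral_herm hs.
have hP' : adj P *m P = 1%:M := mulmx1C hP.
have eD : P *m s *m adj P = diag_mx d.
  by rewrite es !mulmxA hP mul1mx -mulmxA hP mulmx1.
have hd : forall k, d 0 k = (complex.Re (d 0 k))%:C.
  move=> k; apply: real_of_conj.
  have hD : adj (diag_mx d) = diag_mx d by rewrite -eD !adj_mul adjK hs mulmxA.
  have := congr1 (fun M : 'M[C]_(2 * 2) => M k k) hD.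
  by rewrite !mxE eqxx !mulr1n.
pose dd k := complex.Re (d 0 k).
have h1 : \sum_k dd k = 1.
  have : (\sum_k dd k)%:C = 1.
    rewrite rmorph_sum -htr es mxtrace_mulC mulmxA hP mul1mx mxtrace_diag.
    by apply: eq_bigr => k _; rewrite [RHS]hd.
  by move/(congr1 (@complex.Re R)).
have h2 : 2^-1 < \sum_k dd k ^+ 2.
  have : purity s = (\sum_k dd k ^+ 2)%:C.
    rewrite /purity; have -> : s *m s = adj P *m (diag_mx d *m diag_mx d) *m P.
      by rewrite es !mulmxA -(mulmxA (adj P *m diag_mx d) P (adj P)) hP mulmx1.
    rewrite mxtrace_mulC (mulmxA P (adj P)) hP mul1mx tr_diag_mul rmorph_sum.
    apply: eq_bigr => k _; rewrite mxE eqxx mulr1n hd rmorphXn /=.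
    by rewrite expr2.
  rewrite hpur => -[] <-; lra.
have [c0 [c1 [c2 [hc hv]]]] := choose_c4 h1 h2.
pose c := fun k : 'I_3 => if k == 0 then c0 else if k == 1 then c1 else c2.
have [V [hV hVe]] := @null_basis (fun k => c k ^+ 2 - 1) ltac:(rewrite /c /=; lra).
pose u := fun j => \row_k (c k * V j 0 k).
have hu : forall j, unit_vec (u j).
  move=> j; rewrite /unit_vec /rdot.
  rewrite (eq_bigr (fun k => (c k ^+ 2 - 1) * V j 0 k ^+ 2 + V j 0 k * V j 0 k)).
    by rewrite big_split /= hVe add0r -/(rdot (V j) (V j)) hV eqxx.
  by move=> k _; rewrite !mxE; ring.
pose h := Num.sqrt ((2:R)^-1).
have hh : h * h = 2^-1 by rewrite -expr2 sqr_sqrtr // invr_ge0.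
pose B : 'M[C]_(2 * 2) := h%:C *: map_mx (real_complex R) Bt.
have hB : B *m adj B = 1%:M.
  rewrite /B adjZr adj_map_real -scalemxAl -scalemxAr -map_mxM BtBt scalerA.
  apply/matrixP => i j; rewrite !mxE.
  have e : h%:C * h%:C * (2:R)%:C = 1.
    by rewrite -!rmorphM hh mulVf // pnatr_eq0.
  by case: eqP => _ /=; rewrite ?mulr0n ?mulr1n ?rmorph0 ?mulr0 // e.
pose U := B *m P.
have hU : unitary U.
  by rewrite /unitary /U adj_mul mulmxA -(mulmxA B P (adj P)) hP mulmx1 hB.
have := hA U u V hU hu hV.
rewrite sum_trW.
have eW : Wm u V = map_mx (real_complex R) (Wr c0 c1 c2).
  by rewrite /u W_diag // Wc_real.
have eUs : U *m s *m adj U = B *m diag_mx d *m adj B.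
  by rewrite /U adj_mul -eD !mulmxA.
have eM : adj B *m (map_mx (real_complex R) (Wr c0 c1 c2) *m B) =
    (h * h)%:C *: map_mx (real_complex R) (Bt^T *m Wr c0 c1 c2 *m Bt).
  rewrite /B adjZr adj_map_real -scalemxAr -scalemxAr -scalemxAl scalerA.
  by rewrite rmorphM !map_mxM mulmxA.
have eBW : forall k, (Bt^T *m Wr c0 c1 c2 *m Bt) k k = 2 * lam c0 c1 c2 k.
  by move=> k; rewrite BtWBt.
have eval : \tr (U *m s *m adj U *m Wm u V) = (\sum_k dd k * lam c0 c1 c2 k)%:C.
  rewrite eUs eW -!mulmxA mxtrace_mulC -!mulmxA tr_diag_mul rmorph_sum eM.
  set M := Bt^T *m Wr c0 c1 c2 *m Bt.
  apply: eq_bigr => k _; rewrite scale_map_entry eBW hd.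
  have e2 : h * h * (2 * lam c0 c1 c2 k) = lam c0 c1 c2 k.
    by rewrite hh mulrA mulVf ?mul1r // pnatr_eq0.
  by rewrite -!rmorphM e2.
rewrite eval normC_real lecE => /andP[_] /=.
rewrite mulr0 subr0 => hle.
have s3p : 0 < Num.sqrt (3:R) by rewrite sqrtr_gt0.
have hn := ler_norm (\sum_k dd k * lam c0 c1 c2 k).
have : `|\sum_k dd k * lam c0 c1 c2 k| <= Num.sqrt 3.
  by move: hle; rewrite ler_pdivrMl // mulr1.
lra.
Qed.

End Dev.

Theorem corollary1 (R : rcfType) (s : 'M[R[i]]_(2 * 2)) :
  density s ->
  (AUS3 s <-> purity s <= (2 : R)^-1%:C) /\
  (AUS3 s <-> frob (s - (4 : R)^-1%:C%:M) <= (2 : R)^-1).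
Proof.
move=> ds.
have key : AUS3 s <-> fsum (Xof s) <= (4:R)^-1.
  by split; [exact: dirC | exact: dirB].
split.
  rewrite key purity_fsum // lecR.
  by split => h; lra.
by rewrite key (frob_le (Xof s)).
Qed.
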